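(* Let $H=H(\mathcal{P})=(V,E)$ be the Hasse diagram of a finite poset $\mathcal{P}$ and $\phi\colon E\to\mathbf{Z}^+$ an edge coloring. Let $I=I(\mathcal{P},\phi)$ be the SM instance produced by $\mathsf{ConstructInstance}(H,\phi)$ (described below). Then all men's preference lists in $I$ have length at most $3$ if and only if $\phi$ is a proper in-coloring, and all women's preference lists in $I$ have length at most $3$ if and only if $\phi$ is a proper out-coloring.
   Context: An edge coloring $\phi$ of a directed graph is a proper in-coloring if any two distinct edges entering the same vertex receive different colors, and a proper out-coloring if any two distinct edges leaving the same vertex receive different colors. Construction $\mathsf{ConstructInstance}(H,\phi)$ with $V=\{1,\dots,p\}$: for each $v$, let $C_v$ be the set of colors of edges incident to $v$ (entering or leaving); if $|C_v|<2$, add colors from $\{1,2\}$ to $C_v$ until $|C_v|=2$. For each $v$ and $c\in C_v$ create a man $m_{c,v}$ and a woman $w_{c,v}$. Fix an arbitrary cyclic ordering of $C_v$ and for $c\in C_v$ let $c^+$, $c^-$ be the next and previous colors. The preference list of $m_{c,v}$ is: $w_{c,v}$, then the women $w_{c,u}$ for all edges $(u,v)\in E$ with $\phi((u,v))=c$ (in some order), then $w_{c^+,v}$. The preference list of $w_{c,v}$ is: $m_{c^-,v}$, then the men $m_{c,y}$ for all edges $(v,y)\in E$ with $\phi((v,y))=c$ (in some order), then $m_{c,v}$. No other pairs are acceptable. *)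

(* Defs.v *)
From mathcomp Require Import all_boot all_order.
Set Implicit Arguments. Unset Strict Implicit. Unset Printing Implicit Defensive.
Import Order.TTheory.
Local Open Scope order_scope.

Section Construct.
Variables (d : Order.disp_t) (T : finPOrderType d).

Definition hasse_edges : {set T * T} :=
  [set e : T * T | (e.1 < e.2) && ~~ [exists w : T, (e.1 < w) && (w < e.2)]].

(* An edge colouring is a map phi : T * T -> nat; only its values on
   hasse_edges matter (positivity is assumed in the theorem). *)
Variable phi : T * T -> nat.

Definition proper_in_coloring (E : {set T * T}) :=
  forall e1 e2, e1 \in E -> e2 \in E -> e1 <> e2 -> e1.2 = e2.2 -> phi e1 <> phi e2.

Definition proper_out_coloring (E : {set T * T}) :=
  forall e1 e2, e1 \in E -> e2 \in E -> e1 <> e2 -> e1.1 = e2.1 -> phi e1 <> phi e2.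

Definition incident_colors (E : {set T * T}) (v : T) : seq nat :=
  undup [seq phi e | e <- enum E & (e.1 == v) || (e.2 == v)].

(* C_v, padded with colours from {1,2} up to size 2, listed in increasing
   order; this list is the (fixed) cyclic ordering of C_v. *)
Definition Cv (E : {set T * T}) (v : T) : seq nat :=
  let s := incident_colors E v in
  if 2 <= size s then sort leq s
  else if s is [:: c] then sort leq [:: c; if c == 1%N then 2%N else 1%N]
  else [:: 1%N; 2%N].

(* A man m_{c,v} and a woman w_{c,v} are both represented by the pair (c,v). *)
Definition man_pref (E : {set T * T}) (c : nat) (v : T) : seq (nat * T) :=
  (c, v) :: [seq (c, e.1) | e <- enum E & (e.2 == v) && (phi e == c)]
         ++ [:: (next (Cv E v) c, v)].

Definition woman_pref (E : {set T * T}) (c : nat) (v : T) : seq (nat * T) :=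
  (prev (Cv E v) c, v) :: [seq (c, e.2) | e <- enum E & (e.1 == v) && (phi e == c)]
         ++ [:: (c, v)].

End Construct.

(* Main.v *)
Require Import Defs.
From mathcomp Require Import all_boot all_order.
Import Order.TTheory.
Local Open Scope order_scope.

Lemma size_le1P (U : eqType) (s : seq U) : uniq s ->
  (size s <= 1)%N <-> (forall x y, x \in s -> y \in s -> x = y).
Proof.
move=> us; split.
  case: s us => [|a [|b t]] //= _ _ x y.
  by rewrite !inE => /eqP -> /eqP ->.
case: s us => [|a [|b t]] //= /andP[] ; rewrite inE negb_or => /andP[nab _] _ H.
by move: nab; rewrite (H a b) ?inE ?eqxx ?orbT.
Qed.

Lemma Cv_mem (d : Order.disp_t) (T : finPOrderType d) (phi : T * T -> nat)
  (E : {set T * T}) v c : c \in incident_colors phi E v -> c \in Cv phi E v.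
Proof.
rewrite /Cv; case: ifP => Hs H; first by rewrite mem_sort.
move: H Hs; case: (incident_colors phi E v) => [|a [|b t]] //=.
by rewrite inE => /eqP -> _; rewrite mem_sort inE eqxx.
Qed.

Lemma gen (d : Order.disp_t) (T : finPOrderType d) (phi : T * T -> nat)
  (E : {set T * T}) (pr : T * T -> T) (f : nat -> T -> seq (nat * T)) :
  (forall c v, size (f c v) = (size [seq e <- enum E | (pr e == v) && (phi e == c)]).+2) ->
  (forall e v, e \in E -> pr e = v -> phi e \in incident_colors phi E v) ->
  (forall (v : T) (c : nat), c \in Cv phi E v -> (size (f c v) <= 3)%N) <->
  (forall e1 e2, e1 \in E -> e2 \in E -> e1 <> e2 -> pr e1 = pr e2 -> phi e1 <> phi e2).
Proof.
move=> Hs Hinc; split.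
  move=> H e1 e2 E1 E2 ne pe ph.
  have := H (pr e1) (phi e1) (@Cv_mem _ _ _ _ _ _ (Hinc _ _ E1 erefl)).
  rewrite Hs ltnS ltnS.
  move/(@size_le1P _ _ (filter_uniq _ (enum_uniq _))) => /(_ e1 e2).
  rewrite !mem_filter !mem_index_enum !andbT !inE E1 E2 pe ph !eqxx /=.
  by move=> /(_ isT isT).
move=> H v c _; rewrite Hs ltnS ltnS.
apply/(@size_le1P _ _ (filter_uniq _ (enum_uniq _))) => x y.
rewrite !mem_filter !mem_index_enum !andbT !inE => /andP[/andP[/eqP px /eqP cx] Ex] /andP[/andP[/eqP py /eqP cy] Ey].
case: (eqVneq x y) => // /eqP ne; exfalso.
by apply: (H x y Ex Ey ne); [rewrite px py | rewrite cx cy].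
Qed.

Theorem proposition4p1 (d : Order.disp_t) (T : finPOrderType d)
    (phi : T * T -> nat)
    (phi_pos : forall e, e \in hasse_edges T -> (0 < phi e)%N) :
  ((forall (v : T) (c : nat), c \in Cv phi (hasse_edges T) v ->
      (size (man_pref phi (hasse_edges T) c v) <= 3)%N)
     <-> proper_in_coloring phi (hasse_edges T))
  /\
  ((forall (v : T) (c : nat), c \in Cv phi (hasse_edges T) v ->
      (size (woman_pref phi (hasse_edges T) c v) <= 3)%N)
     <-> proper_out_coloring phi (hasse_edges T)).
Proof.
split.
  apply: (@gen _ _ _ _ snd).
    by move=> c v; rewrite /man_pref /= size_cat size_map addn1.
  move=> e v Ee <-; rewrite mem_undup; apply/mapP; exists e => //.
  by rewrite mem_filter mem_enum Ee eqxx orbT.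
apply: (@gen _ _ _ _ fst).
  by move=> c v; rewrite /woman_pref /= size_cat size_map addn1.
move=> e v Ee <-; rewrite mem_undup; apply/mapP; exists e => //.
by rewrite mem_filter mem_enum Ee eqxx.
Qed.
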